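(* Let $\mathcal F\subseteq\mathcal G$ be two prime lattice filters of an MV-algebra $\mathcal L$ with $\mathcal K(\mathcal F)=\mathcal K(\mathcal G)$. Then $$\mathcal K(\mathcal F\sqsubseteq\!\!\to\mathcal G)=\mathcal K(\mathcal F).$$
   Context: $\mathcal L=(L,\oplus,\lnot,0)$ is an MV-algebra. We write $1=\lnot 0$, $x\otimes y=\lnot(\lnot x\oplus\lnot y)$, and $x\to y=\lnot x\oplus y$, and use the usual lattice order. A lattice filter is a nonempty upward-closed subset closed under $\wedge$. It is prime if it is proper and $a\vee b\in\mathcal F$ implies $a\in\mathcal F$ or $b\in\mathcal F$. For an upward-closed $\mathcal F$ and $a\in L$, let $\mathcal F_a=\{z: z\to a\notin\mathcal F\}$. The kernel is $\mathcal K(\mathcal F)=\{z:\forall a\notin\mathcal F,\ z\to a\notin\mathcal F\}$. For $\mathcal F\subseteq\mathcal G$ we put $\mathcal F\sqsubseteq\!\!\to\mathcal G=\bigcap_{a\in L\setminus\mathcal G}\mathcal F_a$. *)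

(* Defs.v *)
Record MVAlgebra := {
  mv_car :> Type;
  mv_oplus : mv_car -> mv_car -> mv_car;
  mv_neg : mv_car -> mv_car;
  mv_zero : mv_car;
  mv_oplus_assoc : forall x y z, mv_oplus x (mv_oplus y z) = mv_oplus (mv_oplus x y) z;
  mv_oplus_comm : forall x y, mv_oplus x y = mv_oplus y x;
  mv_oplus_zero : forall x, mv_oplus x mv_zero = x;
  mv_neg_neg : forall x, mv_neg (mv_neg x) = x;
  mv_oplus_one : forall x, mv_oplus x (mv_neg mv_zero) = mv_neg mv_zero;
  mv_lukasiewicz : forall x y,
    mv_oplus (mv_neg (mv_oplus (mv_neg x) y)) y =
    mv_oplus (mv_neg (mv_oplus (mv_neg y) x)) x
}.

Section MVDefs.
Variable L : MVAlgebra.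

Definition mv_one : L := mv_neg L (mv_zero L).
Definition mv_otimes (x y : L) : L :=
  mv_neg L (mv_oplus L (mv_neg L x) (mv_neg L y)).
Definition mv_impl (x y : L) : L := mv_oplus L (mv_neg L x) y.
Definition mv_le (x y : L) : Prop := mv_impl x y = mv_one.
Definition mv_join (x y : L) : L :=
  mv_oplus L (mv_neg L (mv_oplus L (mv_neg L x) y)) y.
Definition mv_meet (x y : L) : L :=
  mv_neg L (mv_join (mv_neg L x) (mv_neg L y)).

Definition upward_closed (F : L -> Prop) : Prop :=
  forall x y, F x -> mv_le x y -> F y.

Definition lattice_filter (F : L -> Prop) : Prop :=
  (exists x, F x) /\ upward_closed F /\
  (forall x y, F x -> F y -> F (mv_meet x y)).

Definition prime_filter (F : L -> Prop) : Prop :=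
  lattice_filter F /\ (exists x, ~ F x) /\
  (forall a b, F (mv_join a b) -> F a \/ F b).

Definition Fsub (F : L -> Prop) (a : L) : L -> Prop :=
  fun z => ~ F (mv_impl z a).

Definition kernel (F : L -> Prop) : L -> Prop :=
  fun z => forall a, ~ F a -> ~ F (mv_impl z a).

(* F [=-> G = intersection over a in L \ G of F_a *)
Definition filter_impl (F G : L -> Prop) : L -> Prop :=
  fun z => forall a, ~ G a -> Fsub F a z.

End MVDefs.

Arguments mv_impl {L}.
Arguments mv_le {L}.
Arguments mv_join {L}.
Arguments mv_meet {L}.
Arguments upward_closed {L}.
Arguments lattice_filter {L}.
Arguments prime_filter {L}.
Arguments Fsub {L}.
Arguments kernel {L}.
Arguments filter_impl {L}.

(* Main.v *)
Require Import Defs.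
From Stdlib Require Import Classical.



Section Alg.
Variable L : MVAlgebra.
Local Notation o := (mv_oplus L).
Local Notation n := (mv_neg L).
Local Notation z0 := (mv_zero L).
Local Notation one := (mv_neg L (mv_zero L)).

Lemma oA x y z : o x (o y z) = o (o x y) z. Proof. apply mv_oplus_assoc. Qed.
Lemma oC x y : o x y = o y x. Proof. apply mv_oplus_comm. Qed.
Lemma oCA x y z : o x (o y z) = o y (o x z).
Proof. rewrite !oA, (oC x y); reflexivity. Qed.
Lemma o0 x : o x z0 = x. Proof. apply mv_oplus_zero. Qed.
Lemma o0l x : o z0 x = x. Proof. rewrite oC; apply o0. Qed.
Lemma nn x : n (n x) = x. Proof. apply mv_neg_neg. Qed.
Lemma o1 x : o x one = one. Proof. apply mv_oplus_one. Qed.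
Lemma o1l x : o one x = one. Proof. rewrite oC; apply o1. Qed.
Lemma n1 : n one = z0. Proof. apply nn. Qed.
Lemma luk x y : o (n (o (n x) y)) y = o (n (o (n y) x)) x.
Proof. apply mv_lukasiewicz. Qed.

Lemma B1 x : o (n x) x = one.
Proof.
  pose proof (luk x one) as H. rewrite o1, n1, o0l in H. congruence.
Qed.
Lemma B1' x : o x (n x) = one. Proof. rewrite oC; apply B1. Qed.

Lemma decomp a b : o (n a) b = one -> b = o a (n (o (n b) a)).
Proof.
  intro H. pose proof (luk a b) as E. rewrite H, n1, o0l in E. rewrite (oC a). exact E.
Qed.

Lemma cut X P Y : o X P = one -> o (n P) Y = one -> o X Y = one.
Proof.
  intros H1 H2.
  assert (H1' : o (n (n X)) P = one) by (rewrite nn; exact H1).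
  apply decomp in H1'. apply decomp in H2.
  rewrite H2, H1', <- !oA, oA, B1', o1l. reflexivity.
Qed.

Lemma MP x y : o (o (n x) (n (o (n x) y))) y = one.
Proof. rewrite <- oA, luk, oCA, B1, o1. reflexivity. Qed.

Definition le x y := o (n x) y = one.

Lemma le_trans a b c : le a b -> le b c -> le a c.
Proof. unfold le; intros; eapply cut; eauto. Qed.

Lemma le_refl a : le a a. Proof. apply B1. Qed.

Definition join a b := o (n (o (n a) b)) b.
Definition meet a b := n (join (n a) (n b)).

Lemma join_comm a b : join a b = join b a. Proof. apply luk. Qed.

Lemma le_neg a b : le a b -> le (n b) (n a).
Proof. unfold le; rewrite nn, oC; auto. Qed.

Lemma le_mono_o a b t : le a b -> le (o a t) (o b t).
Proof.
  unfold le; intro H.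
  assert (E : o (o (n (o a t)) t) a = one) by (rewrite <- oA, (oC t a), B1; reflexivity).
  pose proof (cut _ _ _ E H) as R. rewrite <- oA, (oC t b) in R. exact R.
Qed.

Lemma join_le a c : le a c -> join a c = c.
Proof. unfold le, join; intro H. rewrite H, n1, o0l; reflexivity. Qed.

Lemma join_mono a b c : le b c -> le (join a b) (join a c).
Proof.
  intro H. rewrite (join_comm a b), (join_comm a c). unfold join.
  apply le_mono_o. apply le_neg.
  apply le_mono_o. apply le_neg. exact H.
Qed.

Lemma join_lub a b c : le a c -> le b c -> le (join a b) c.
Proof.
  intros Ha Hb. rewrite <- (join_le _ _ Ha). apply join_mono; exact Hb.
Qed.

Lemma meet_glb w p q : le w p -> le w q -> le w (meet p q).
Proof.
  intros Hp Hq. unfold meet.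
  assert (E : le (join (n p) (n q)) (n w)) by (apply join_lub; apply le_neg; auto).
  apply le_neg in E. rewrite nn in E. exact E.
Qed.

Lemma meet_le_l p q : le (meet p q) p.
Proof. unfold le, meet, join. rewrite nn, nn, <- oA, (oC (n q) p), B1. reflexivity. Qed.
Lemma meet_le_r p q : le (meet p q) q.
Proof. unfold le, meet, join. rewrite nn, nn, <- oA, B1, o1. reflexivity. Qed.

Lemma le0 z : le z z0 -> z = z0.
Proof. unfold le; rewrite o0; intro H. rewrite <- (nn z), H. apply n1. Qed.

Lemma le_mono_o' a b t : le a b -> le (o t a) (o t b).
Proof. intro H. rewrite (oC t a), (oC t b). apply le_mono_o; exact H. Qed.

Lemma le_eq a b : a = b -> le a b. Proof. intros ->; apply le_refl. Qed.

Lemma csym x y : o (n x) (n (o (n x) y)) = o (n y) (n (o (n y) x)).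
Proof.
  pose proof (luk (n y) (n x)) as E. rewrite !nn in E.
  rewrite (oC (n x)), (oC (n y) x), (oC (n x) y), (oC (n y)). exact E.
Qed.

Lemma cu x y : o (n (o (n x) (n (o (n x) y)))) (n (o (n x) y)) = x.
Proof.
  rewrite luk, nn. rewrite (oC (o (n x) y)), oA, B1', o1l, n1, o0l. reflexivity.
Qed.

Lemma prelin x y : meet (n (o (n x) y)) (n (o (n y) x)) = z0.
Proof.
  set (u := n (o (n x) y)). set (v := n (o (n y) x)).
  set (c := n (o (n x) (n (o (n x) y)))).
  set (z := meet u v).
  assert (Hcu : o c u = x) by apply cu.
  assert (Hcv : o c v = y) by (unfold c, v; rewrite csym; apply cu).
  assert (Hm : meet x y = c).
  { unfold meet, join, c. rewrite !nn. f_equal. rewrite (oC (n x)).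
    pose proof (luk (n y) (n x)) as E. rewrite !nn in E. rewrite <- E.
    rewrite (oC y). reflexivity. }
  assert (H1 : le (o c z) c).
  { apply le_trans with (meet x y); [| rewrite Hm; apply le_refl]. apply meet_glb.
    - apply le_trans with (o c u); [apply le_mono_o'; apply meet_le_l | rewrite Hcu; apply le_refl].
    - apply le_trans with (o c v); [apply le_mono_o'; apply meet_le_r | rewrite Hcv; apply le_refl]. }
  assert (H2 : le z (n c)).
  { apply le_trans with u; [apply meet_le_l|].
    unfold le, u, c. rewrite !nn. rewrite oCA, B1', o1. reflexivity. }
  apply le0. apply le_trans with (meet z (n c)).
  - apply meet_glb; [apply le_refl | exact H2].
  - unfold le, meet, join. rewrite !nn, o0. rewrite (oC z c). exact H1.
Qed.

Lemma L_P x y e : le (meet (o (n (o (n x) y)) e) (o (n (o (n y) x)) e)) e.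
Proof.
  set (t := meet _ _).
  assert (Ht1 : le t (o (n (o (n x) y)) e)) by apply meet_le_l.
  assert (Ht2 : le t (o (n (o (n y) x)) e)) by apply meet_le_r.
  assert (Hw : le (n (o (n t) e)) (meet (n (o (n x) y)) (n (o (n y) x)))).
  { apply meet_glb; unfold le; rewrite nn, <- oA, (oC e); assumption. }
  rewrite prelin in Hw. unfold le in Hw. rewrite nn, o0 in Hw. exact Hw.
Qed.

Lemma L_b z a b : le (o (n b) a) (o (n (o (n z) b)) (o (n z) a)).
Proof.
  pose proof (MP z b) as H1. pose proof (MP b a) as H2. rewrite <- oA in H2.
  pose proof (cut _ _ _ H1 H2) as R. unfold le.
  rewrite <- oA, (oCA (n (o (n z) b)) (n (o (n b) a))), (oCA (n z) (n (o (n b) a))),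
    (oCA (n z) (n (o (n z) b))) in R. exact R.
Qed.

Lemma L_c z y c : le (o (n z) y) (o (n (n (o (n z) (n (o (n y) c))))) c).
Proof.
  unfold le. rewrite nn, <- oA.
  assert (H1 : o (o (n (o (n z) y)) (n z)) y = one) by (rewrite <- oA, (oC (n z) y), B1; reflexivity).
  pose proof (MP y c) as H2. rewrite <- oA in H2.
  pose proof (cut _ _ _ H1 H2) as R. rewrite <- oA in R. exact R.
Qed.

Lemma L_d z y c : le (o (n y) (o (n z) c)) (o (n z) (o (n z) (n (o (n z) (n (o (n y) c)))))).
Proof.
  unfold le. set (W := o (n y) c).
  assert (H1 : o (o (n (o (n z) W)) (n z)) W = one) by (rewrite <- oA, (oC (n (o (n z) W))), B1'; reflexivity).
  assert (H2 : o (n W) (o (n z) (n (o (n z) (n W)))) = one) by (rewrite oA, (oC (n W) (n z)), B1'; reflexivity).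
  pose proof (cut _ _ _ H1 H2) as R. rewrite <- oA in R. unfold W in R.
  rewrite (oCA (n z) (n y)) in R. exact R.
Qed.

Lemma L_j1 x y : le x (o (n (o (n x) y)) y).
Proof. unfold le. rewrite oCA, oC, B1'. reflexivity. Qed.

Lemma L_j2 a b : le b (o (n (o (n a) b)) b).
Proof. unfold le. rewrite oCA, B1, o1. reflexivity. Qed.

Lemma L_anti x x' a : le x x' -> le (o (n x') a) (o (n x) a).
Proof. intro H. apply le_mono_o, le_neg, H. Qed.


End Alg.

Lemma neg_all_imp {A : Type} (P Q : A -> Prop) :
  ~ (forall a, P a -> ~ Q a) -> exists a, P a /\ Q a.
Proof.
  intro H. apply NNPP. intro H2. apply H. intros a Pa Qa. apply H2. exists a. auto.
Qed.

Section Main.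
Variable L : MVAlgebra.
Variables F G : L -> Prop.
Local Notation o := (mv_oplus L).
Local Notation n := (mv_neg L).

Lemma up_le (FU : upward_closed F) x y : F x -> le L x y -> F y.
Proof. intros Hx Hl. exact (FU x y Hx Hl). Qed.

Lemma ktrans (FU : upward_closed F) x x' :
  kernel F (mv_impl x x') -> F x -> F x'.
Proof.
  intros K Fx. apply NNPP. intro nF. apply (K x' nF).
  apply (up_le FU x); [exact Fx | apply L_j1].
Qed.

Lemma kup (FU : upward_closed F) k k' : kernel F k -> le L k k' -> kernel F k'.
Proof.
  intros K Hl a na Fa. apply (K a na). apply (up_le FU _ _ Fa). apply L_anti. exact Hl.
Qed.
End Main.

Theorem mainTheorem11 (L : MVAlgebra) (F G : L -> Prop) :
  prime_filter F -> prime_filter G ->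
  (forall x, F x -> G x) ->
  (forall z, kernel F z <-> kernel G z) ->
  forall z, kernel (filter_impl F G) z <-> kernel F z.
Proof.
  intros [[_ [FU FM]] [_ FP]] [[_ [GU GM]] [_ GP]] FG KFG.
  set (H := filter_impl F G).
  assert (Hup : forall w w', H w -> le L w w' -> H w').
  { intros w w' Hw Hl a na Fa. apply (Hw a na). apply (up_le L F FU _ _ Fa). apply L_anti; exact Hl. }
  assert (tot : forall d s, ~ G d -> G s -> kernel F (mv_impl d s)).
  { intros d s nGd Gs. apply NNPP. intro nK.
    destruct (neg_all_imp _ _ nK) as [a [na Fa]].
    assert (nK2 : ~ kernel F (mv_impl s d)).
    { intro K2. apply nGd. apply (ktrans L G GU s d); [apply KFG; exact K2 | exact Gs]. }
    destruct (neg_all_imp _ _ nK2) as [a' [na' Fa']].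
    set (e := mv_join a a').
    assert (ne : ~ F e) by (intro Fe; destruct (FP a a' Fe); auto).
    apply ne. apply (up_le L F FU _ _ (FM _ _ (up_le L F FU _ _ Fa (le_mono_o' L _ _ _ (L_j1 L a a')))
                                           (up_le L F FU _ _ Fa' (le_mono_o' L _ _ _ (L_j2 L a a'))))).
    apply L_P. }
  intro z. split.
  - intros KH. apply NNPP. intro nK.
    destruct (neg_all_imp _ _ nK) as [y [ny Fy]].
    assert (nKG : ~ kernel G z) by (intro K; apply nK; apply KFG; exact K).
    destruct (neg_all_imp _ _ nKG) as [c [nc Gc]].
    assert (H1 : H (mv_one L)).
    { intros a na Fa. apply na. apply FG. unfold mv_impl, mv_one in Fa.
      rewrite n1, o0l in Fa. exact Fa. }
    assert (Hz : H z).
    { apply NNPP. intro nHz. apply (KH z nHz). unfold mv_impl. rewrite B1. exact H1. }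
    assert (ns : ~ F (mv_impl z c)) by exact (Hz c nc).
    set (b := mv_otimes L z (mv_impl y c)).
    assert (nHb : ~ H b).
    { intro Hb. exact (Hb c nc (up_le L F FU _ _ Fy (L_c L z y c))). }
    assert (nH2 : ~ H (mv_impl z (mv_impl z b))) by (apply KH, KH, nHb).
    apply nH2. apply (Hup (mv_impl y (mv_impl z c))); [| apply L_d].
    intros d nd Fd.
    assert (Kd := tot d (mv_impl z c) nd Gc).
    assert (Kd2 := kup L F FU _ _ Kd (L_b L (mv_impl y (mv_impl z c)) (mv_impl z c) d)).
    assert (Fj := ktrans L F FU _ _ Kd2 Fd).
    destruct (FP _ _ Fj); auto.
  - intros KF b nHb Hzb.
    destruct (neg_all_imp _ _ nHb) as [a [na Fa]].
    assert (nGa : ~ G (mv_impl z a)) by (apply (proj1 (KFG z) KF); exact na).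
    apply (Hzb _ nGa). apply (up_le L F FU _ _ Fa). apply L_b.
Qed.
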